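(* Consider BPSK transmission of a binary linear code over an AWGN channel with noise variance $\sigma^2$ (which determines the SNR), ML decoding with error event $E$, and a family of regions $\{\mathcal{R}(r), r\in\mathcal{I}\}$ satisfying assumptions A1–A3 of the context, with pdf $g$ of $R$ and a non-trivial conditional bound $f_u$ (i.e. $f_u(r)\le1$ for some $r$). Let $f_u(r)$ be a non-decreasing and continuous function of $r$. If $f_u$ does not depend on the SNR, then the optimal parameter $r_1$ minimizing over $r^*$ the bound $\int_{-\infty}^{r^*} f_u(r)g(r)\,{\rm d}r+\int_{r^*}^{+\infty}g(r)\,{\rm d}r$ does not depend on the SNR either.
   Context: System model: codeword bits $c_t$ of a binary linear code of length $n$ are mapped to $s_t=1-2c_t$; $\underline y=\underline s+\underline z$ with $\underline z$ i.i.d. $\mathcal{N}(0,\sigma^2)$; ML (nearest signal) decoding; the all-zero codeword's image $\underline s^{(0)}$ is transmitted; $E$ is the error event. Assumptions: (A1) regions nested ($\mathcal{R}(r_1)\subset\mathcal{R}(r_2)$ for $r_1<r_2$), with pairwise disjoint boundaries whose union over $r\in\mathcal{I}$ is $\mathbb{R}^n$. (A2) $R:\underline y\mapsto r$ for $\underline y\in\partial\mathcal{R}(r)$ has pdf $g(r)$ (set $g\equiv0$ outside $\mathcal{I}$). (A3) ${\rm Pr}\{E\mid\underline y\in\partial\mathcal{R}(r)\}\le f_u(r)$. *)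

(* Defs.v *)
From HB Require Import structures.
From mathcomp Require Import all_boot all_order all_algebra.
From mathcomp Require Import all_classical all_reals all_analysis.
Set Implicit Arguments. Unset Strict Implicit. Unset Printing Implicit Defensive.
Import Order.TTheory GRing.Theory Num.Theory.
Import numFieldNormedType.Exports.
Local Open Scope classical_set_scope.
Local Open Scope ring_scope.

Definition is_pdf {R : realType} (g : R -> R) : Prop :=
  measurable_fun setT g /\ (forall x, 0 <= g x) /\
  (\int[@lebesgue_measure R]_(x in setT) (g x)%:E = 1)%E.

Definition ub_bound {R : realType} (g f_u : R -> R) (t : \bar R) : \bar R :=
  (\int[@lebesgue_measure R]_(x in [set x : R | (x%:E <= t)%E]) (f_u x * g x)%:E
   + \int[@lebesgue_measure R]_(x in [set x : R | (t < x%:E)%E]) (g x)%:E)%E.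

(* Main.v *)
Require Import Defs.
From HB Require Import structures.
From mathcomp Require Import all_boot all_order all_algebra.
From mathcomp Require Import all_classical all_reals all_analysis.
From mathcomp Require Import measurable_realfun.
Import Order.TTheory GRing.Theory Num.Theory.
Import numFieldNormedType.Exports.
Local Open Scope classical_set_scope.
Local Open Scope ring_scope.

Lemma key (R : realType) (f_u : R -> R)
  (f_u_nondecr : {homo f_u : x y / x <= y})
  (f_u_cont : continuous f_u) :
  let r1 := ereal_sup (EFin @` [set x | f_u x <= 1]) in
  (forall x, (x%:E <= r1)%E -> f_u x <= 1) /\ (forall x, (r1 < x%:E)%E -> 1 < f_u x).
Proof.
move=> r1; split; last first.
  move=> x xr; rewrite ltNge; apply/negP => fx.
  have : (x%:E <= r1)%E by apply: ereal_sup_ubound; exists x.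
  by rewrite leNgt xr.
have lt_case : forall x, (x%:E < r1)%E -> f_u x <= 1.
  move=> x /ereal_sup_gt [_ [s fs <-]] xs.
  by apply: le_trans fs; apply: f_u_nondecr; rewrite -lee_fin ltW.
move=> x; rewrite le_eqVlt => /orP[/eqP xr|]; last exact: lt_case.
rewrite leNgt; apply/negP => fx.
have := @cvgr_gt _ _ _ (nbhs_filter x) f_u _ (f_u_cont x) _ fx.
move=> H; have [e /= e0 He] := (nbhs_ballP _ _).1 H.
have hb : ball x e (x - e / 2).
  rewrite /ball /= opprB addrC subrK ger0_norm; last by rewrite divr_ge0 // ltW.
  by rewrite gtr_pMr // invf_lt1 // ltr1n.
have := He _ hb; rewrite /= ltNge lt_case //.
by rewrite -xr lte_fin gtrBl divr_gt0.
Qed.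

Theorem corollary1 (R : realType) (f_u : R -> R) (g : R -> R -> R)
  (f_u_ge0 : forall r, 0 <= f_u r)
  (f_u_nontrivial : exists r, f_u r <= 1)
  (f_u_nondecr : {homo f_u : x y / x <= y})
  (f_u_cont : continuous f_u)
  (g_pdf : forall sigma : R, 0 < sigma -> is_pdf (g sigma)) :
  exists r1 : \bar R, forall sigma : R, 0 < sigma ->
    forall t : \bar R, (ub_bound (g sigma) f_u r1 <= ub_bound (g sigma) f_u t)%E.
Proof.
have [P1 P2] := @key _ _ f_u_nondecr f_u_cont.
set r1 := ereal_sup _ in P1 P2.
exists r1 => sigma s0 t.
have [mg [g0 _]] := g_pdf sigma s0.
set G := g sigma in mg g0 *.
have mf : measurable_fun setT f_u by exact: continuous_measurable_fun.
pose k (s : \bar R) (x : R) :=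
  (if (x%:E <= s)%E then f_u x * G x else G x)%:E.
have mb : forall s : \bar R, measurable_fun setT (fun x : R => (x%:E <= s)%E).
  move=> s; apply: measurable_fun_lee => //.
have mA : forall s : \bar R, measurable [set x : R | (x%:E <= s)%E].
  move=> s; have := mb s measurableT [set true] I.
  by rewrite setTI; congr measurable; apply/seteqP; split => x /=.
have CA : forall s : \bar R, ~` [set x : R | (x%:E <= s)%E] = [set x | (s < x%:E)%E].
  by move=> s; apply/seteqP; split => x /=; rewrite ltNge => /negP.
have mk : forall s, measurable_fun setT (k s).
  move=> s; apply/measurable_EFinP; apply: measurable_fun_ifT => //.
  exact: measurable_funM.
have k0 : forall s x, (0 <= k s x)%E.
  by move=> s x; rewrite /k lee_fin; case: ifP => _ //; rewrite mulr_ge0.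
have E : forall s, ub_bound G f_u s = (\int[lebesgue_measure]_(x in setT) k s x)%E.
  move=> s.
  rewrite -(setUv [set x : R | (x%:E <= s)%E]) ge0_integral_setU //.
  - rewrite /ub_bound CA; congr (_ + _)%E; apply: eq_integral => x; rewrite inE /= /k.
      by move=> ->.
    by rewrite leNgt => ->.
  - exact: (mA s).
  - exact: (measurableC (mA s)).
  - rewrite setUv; exact: (mk s).
  - exact/disj_setPCl.
rewrite !E; apply: ge0_le_integral => //; try (by move=> x _; exact: k0); try exact: mk.
move=> x _; rewrite /k lee_fin.
case: ifPn => xr; case: ifPn => xt //.
  by rewrite ler_piMl // P1.
rewrite -ltNge in xr.
by rewrite ler_peMl // ltW // P2.
Qed.
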